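(* Let $\{\ket{j}\}_{j=0}^{7}$ be the computational basis of three qubits, where $\ket{j}=\ket{j_1j_2j_3}$ with $j=4j_1+2j_2+j_3$, and let $$\ket{\psi_3}=\frac{1}{4\sqrt{2}}\left(\ket{0}+\ket{1}+\ket{2}+\ket{3}+\ket{4}+\ket{5}+\ket{6}-5\ket{7}\right),\qquad \rho_3=\ket{\psi_3}\bra{\psi_3}.$$ Denote by $A_3,B_3,C_3$ the first, second and third qubits of $\rho_3$. Then $$D(B_3C_3|A_3)=D(A_3C_3|B_3)=D(A_3B_3|C_3)=D(C_3|A_3B_3)=D(B_3|A_3C_3)=D(A_3|B_3C_3)$$ $$=-\tfrac{1}{16}(8+\sqrt{37})\log\left(\tfrac{1}{16}(8+\sqrt{37})\right)-\tfrac{1}{16}(8-\sqrt{37})\log\left(\tfrac{1}{16}(8-\sqrt{37})\right)\approx 0.52,$$ and moreover $D(B_3C_3|A_3)=S(\rho_{A_3})$ and $D(C_3|A_3B_3)=S(\rho_{A_3B_3})$.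
   Context: Logarithms are base 2, and $S(\sigma)=-\mathrm{Tr}(\sigma\log\sigma)$ is the von Neumann entropy; $\rho_{A_3}$ and $\rho_{A_3B_3}$ denote the reduced states of $\rho_3$ on the first qubit and on the first two qubits. For a state $\rho_{XY}$ on a bipartite system $X\otimes Y$ (here $X$ and $Y$ are complementary groups of the three qubits), the quantum discord with measurement on $X$ is $$D(Y|X)=\min_{\{E_a\}}\sum_a p_a S(\rho_{Y|a})+S(\rho_X)-S(\rho_{XY}),$$ where the minimum is over all POVMs $\{E_a\}$ on $X$ ($E_a\ge 0$, $\sum_a E_a=I$), $p_a=\mathrm{Tr}((E_a\otimes I)\rho_{XY})$, $\rho_{Y|a}=\mathrm{Tr}_X((E_a\otimes I)\rho_{XY})/p_a$, and $\rho_X,\rho_Y$ are reduced states. *)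

(* Defs.v *)
From HB Require Import structures.
From mathcomp Require Import all_boot all_order all_algebra.
From mathcomp Require Import complex mxtens.
From mathcomp Require Import classical_sets reals exp.

Set Implicit Arguments.
Unset Strict Implicit.
Unset Printing Implicit Defensive.

Import Order.TTheory GRing.Theory Num.Theory.
Local Open Scope ring_scope.

Section QuantumDiscord.
Variable R : realType.
Local Notation C := R[i].

Definition log2 (x : R) : R := ln x / ln 2.
Definition xlog2x (x : R) : R := if x == 0 then 0 else x * log2 x.

Definition dagger m n (A : 'M[C]_(m, n)) : 'M[C]_(n, m) :=
  (map_mx (fun z : C => Num.conj z) A)^T.

Definition psd n (A : 'M[C]_n) : Prop :=
  forall v : 'cV[C]_n, 0 <= (dagger v *m A *m v) 0 0.

(* eigenvalues (with multiplicity) = roots of the characteristic polynomial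
   over the algebraically closed field R[i] *)
Definition eigenvalues n (A : 'M[C]_n) : seq C :=
  sval (closed_field_poly_normal (char_poly A)).

(* von Neumann entropy S(s) = -Tr(s log s) = - sum_lambda lambda log2 lambda,
   computed through the spectrum (eigenvalues of a density matrix are real) *)
Definition vn_entropy n (A : 'M[C]_n) : R :=
  - \sum_(z <- eigenvalues A) xlog2x (complex.Re z).

(* bipartite system X (x) Y with dim X = p, dim Y = q; the basis vector
   |i>|j> has index i * q + j  (mxtens_index) *)
Definition ptrace_X p q (M : 'M[C]_(p * q)) : 'M[C]_q :=
  \matrix_(j, j') \sum_(i < p) M (mxtens_index (i, j)) (mxtens_index (i, j')).
Definition ptrace_Y p q (M : 'M[C]_(p * q)) : 'M[C]_p :=
  \matrix_(i, i') \sum_(j < q) M (mxtens_index (i, j)) (mxtens_index (i', j)).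

Definition povm p k (E : 'I_k -> 'M[C]_p) : Prop :=
  (forall a, psd (E a)) /\ \sum_(a < k) E a = 1%:M.

Definition meas_op p q (Ea : 'M[C]_p) (rho : 'M[C]_(p * q)) : 'M[C]_(p * q) :=
  (Ea *t (1%:M : 'M[C]_q)) *m rho.
Definition meas_prob p q (Ea : 'M[C]_p) (rho : 'M[C]_(p * q)) : R :=
  complex.Re (\tr (meas_op Ea rho)).
Definition post_state p q (Ea : 'M[C]_p) (rho : 'M[C]_(p * q)) : 'M[C]_q :=
  (real_complex R (meas_prob Ea rho)^-1) *: ptrace_X (meas_op Ea rho).

Definition avg_cond_entropy p q k (E : 'I_k -> 'M[C]_p) (rho : 'M[C]_(p * q)) : R :=
  \sum_(a < k) meas_prob (E a) rho * vn_entropy (post_state (E a) rho).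

(* quantum discord D(Y|X) with measurement on the first factor X;
   the minimum over all (finite-outcome) POVMs is taken as an infimum *)
Definition discord p q (rho : 'M[C]_(p * q)) : R :=
  inf [set x : R | exists (k : nat) (E : 'I_k -> 'M[C]_p),
                     povm E /\ x = avg_cond_entropy E rho]
  + vn_entropy (ptrace_Y rho) - vn_entropy rho.

(* three qubits: index j = 4 j1 + 2 j2 + j3; qubit t (0 = first) of j *)
Definition qbit (j : 'I_8) (t : 'I_3) : bool := odd (j %/ 2 ^ (2 - t)).

(* reorder the qubits: new position t carries old qubit o t *)
Definition reorder (o : 'I_3 -> 'I_3) (rho : 'M[C]_8) : 'M[C]_8 :=
  \matrix_(i, j) \sum_(k < 8) \sum_(l < 8)
     (if [forall t, qbit k (o t) == qbit i t] && [forall t, qbit l (o t) == qbit j t]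
      then rho k l else 0).

Definition qorder (a b c : 'I_3) : 'I_3 -> 'I_3 :=
  fun t => if t == 0 then a else if t == 1 then b else c.

Definition qA : 'I_3 := inord 0.
Definition qB : 'I_3 := inord 1.
Definition qC : 'I_3 := inord 2.

Definition psi3 : 'cV[C]_8 :=
  \col_(j < 8) real_complex R ((if val j == 7%N then -5 else 1) / (4 * Num.sqrt 2)).
Definition rho3 : 'M[C]_8 := psi3 *m dagger psi3.

Definition rho_A3 : 'M[C]_2 := @ptrace_Y 2 4 rho3.
Definition rho_A3B3 : 'M[C]_4 := @ptrace_Y 4 2 rho3.

Definition D_BC_A := @discord 2 4 rho3.
Definition D_AC_B := @discord 2 4 (reorder (qorder qB qA qC) rho3).
Definition D_AB_C := @discord 2 4 (reorder (qorder qC qA qB) rho3).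
Definition D_C_AB := @discord 4 2 rho3.
Definition D_B_AC := @discord 4 2 (reorder (qorder qA qC qB) rho3).
Definition D_A_BC := @discord 4 2 (reorder (qorder qB qC qA) rho3).

Definition lemma3_value : R :=
  - ((8 + Num.sqrt 37) / 16) * log2 ((8 + Num.sqrt 37) / 16)
  - ((8 - Num.sqrt 37) / 16) * log2 ((8 - Num.sqrt 37) / 16).

End QuantumDiscord.

(* Main.v *)
Require Import Defs.
From HB Require Import structures.
From mathcomp Require Import all_boot all_order all_algebra.
From mathcomp Require Import complex mxtens.
From mathcomp Require Import classical_sets reals exp.
From mathcomp Require Import ring lra zify.
Set Implicit Arguments.
Unset Strict Implicit.
Unset Printing Implicit Defensive.
Import Order.TTheory GRing.Theory Num.Theory.
Local Open Scope ring_scope.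
Local Open Scope complex_scope.

Section S.
Variable R : realType.
Local Notation C := R[i].

Lemma eig_spec n (A : 'M[C]_n) :
  char_poly A = \prod_(z <- eigenvalues A) ('X - z%:P).
Proof.
rewrite /eigenvalues; case: (closed_field_poly_normal (char_poly A)) => r Hr /=.
by rewrite {1}Hr (monicP (char_poly_monic A)) scale1r.
Qed.

Lemma eig_size n (A : 'M[C]_n) : size (eigenvalues A) = n.
Proof.
apply: succn_inj; rewrite -(size_char_poly A) eig_spec size_prod_XsubC //.
Qed.

Lemma eig_vec n (A : 'M[C]_n) z : z \in eigenvalues A ->
  exists2 v : 'rV_n, v *m A = z *: v & v != 0.
Proof.
move=> zA; apply/eigenvalueP; rewrite eigenvalue_root_char eig_spec.
by rewrite root_prod_XsubC.
Qed.

Lemma eig_sum n (A : 'M[C]_n) : \sum_(z <- eigenvalues A) z = \tr A.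
Proof.
case: n A => [|n] A.
  have /size0nil -> := eig_size A.
  by rewrite big_nil /mxtrace big_ord0.
have := char_poly_trace A (ltn0Sn n).
have -> : n.+1.-1 = (size (eigenvalues A)).-1 by rewrite eig_size.
rewrite eig_spec coefPn_prod_XsubC ?eig_size //.
by move/eqP; rewrite eqr_opp => /eqP.
Qed.


Lemma conjE (z : C) : Num.conj z = conjc z.
Proof. by []. Qed.

Lemma conj_real (x : R) : Num.conj (x%:C) = x%:C :> C.
Proof. by rewrite conjE conjc_real. Qed.

Lemma dagger_mx_E m n (A : 'M[C]_(m, n)) i j : dagger A i j = Num.conj (A j i).
Proof. by rewrite !mxE. Qed.

Lemma le0c (z : C) : 0 <= z -> z = (complex.Re z)%:C /\ 0 <= complex.Re z.
Proof.
case: z => a b; rewrite /= => H.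
move: H; rewrite lecE /= => /andP[/eqP -> H]; by [].
Qed.


Lemma daggerK m n (A : 'M[C]_(m, n)) : dagger (dagger A) = A.
Proof. by apply/matrixP => i j; rewrite !mxE conjCK. Qed.

Lemma norm_row_gt0 n (v : 'rV[C]_n) : v != 0 -> 0 < (v *m dagger v) 0 0.
Proof.
move=> nz; rewrite mxE lt_def; apply/andP; split; last first.
  by apply: sumr_ge0 => j _; rewrite !mxE mul_conjC_ge0.
apply/negP => /eqP H; move/negP: nz; apply; apply/eqP/matrixP => i j.
rewrite (ord1 i) mxE.
have H0 : forall k, true -> 0 <= v 0 k * dagger v k 0.
  by move=> k _; rewrite !mxE mul_conjC_ge0.
have := @psumr_eq0P _ _ _ _ H0 H j isT; rewrite !mxE => /eqP; rewrite mul_conjC_eq0 => /eqP //.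
Qed.

Lemma psd_eig_ge0 n (A : 'M[C]_n) z : psd A -> z \in eigenvalues A -> 0 <= z.
Proof.
move=> pA /eig_vec [v vA nz].
have := pA (dagger v); rewrite daggerK vA -scalemxAl mxE.
by rewrite pmulr_lge0 // norm_row_gt0.
Qed.


Lemma le_sum_seq (s : seq C) z : (forall w, w \in s -> 0 <= w) -> z \in s ->
  z <= \sum_(w <- s) w.
Proof.
elim: s => [//|x s IH] H; rewrite inE big_cons => /orP [/eqP ->|zs].
  rewrite lerDl; rewrite big_seq; apply: sumr_ge0 => w ws; apply: H.
  by rewrite inE ws orbT.
apply: (le_trans (IH _ zs)); first by move=> w ws; apply: H; rewrite inE ws orbT.
by rewrite lerDr; apply: H; rewrite inE eqxx.
Qed.

Lemma xlog2x_le0 (x : R) : 0 <= x <= 1 -> xlog2x x <= 0.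
Proof.
move=> /andP [x0 x1]; rewrite /xlog2x; case: eqP => // /eqP nx0.
rewrite /log2 mulr_ge0_le0 //; rewrite mulr_le0_ge0 //.
  exact: ln_le0.
by rewrite invr_ge0 ltW // ln_gt0 // ltr1n.
Qed.

Lemma ent_ge0 n (A : 'M[C]_n) : psd A -> \tr A = 1 -> 0 <= vn_entropy A.
Proof.
move=> pA trA; rewrite /vn_entropy oppr_ge0 big_seq; apply: sumr_le0 => z zs.
have z0 := psd_eig_ge0 pA zs.
have z1 : z <= 1 by rewrite -trA -eig_sum; apply: le_sum_seq => // w; exact: psd_eig_ge0.
apply: xlog2x_le0; case: (le0c z0) => E H; rewrite H /=.
by move: z1; rewrite {1}E -[1]/((1:R)%:C) (@lecR R).
Qed.


Lemma sum_seq2 (V : zmodType) (s : seq C) (c : C) (g : C -> V) :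
  (forall z, z \in s -> z = 0 \/ z = c) -> c != 0 -> g 0 = 0 ->
  \sum_(z <- s) g z = g c *+ count_mem c s.
Proof.
move=> Hs c0 g0; elim: s Hs => [|x s IH] Hs; first by rewrite big_nil.
rewrite big_cons IH; last by move=> z zs; apply: Hs; rewrite inE zs orbT.
have [->|->] := Hs x (mem_head _ _).
  by rewrite g0 add0r /= eq_sym (negbTE c0) add0n.
by rewrite /= eqxx add1n mulrS.
Qed.

Lemma eig_mul n (A B : 'M[C]_n) z (v : 'rV[C]_n) : v *m A = z *: v ->
  v *m (A *m B) = z *: (v *m B).
Proof. by move=> H; rewrite mulmxA H scalemxAl. Qed.

Lemma ent_rank1 n (u : 'cV[C]_n) (w : 'rV[C]_n) :
  vn_entropy (u *m w) = - xlog2x (complex.Re (\tr (u *m w))).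
Proof.
set A := u *m w; set c := \tr A.
have Hc : c = (w *m u) 0 0.
  by rewrite /c /A mxtrace_mulC /mxtrace big_ord1.
have AA : A *m A = c *: A.
  rewrite /A mulmxA -(mulmxA u w u) [w *m u]mx11_scalar -Hc.
  by rewrite mul_mx_scalar -scalemxAl.
have ev : forall z, z \in eigenvalues A -> z = 0 \/ z = c.
  move=> z /eig_vec [v vA nz].
  have := eig_mul A vA; rewrite AA -scalemxAr vA scalerA => /eqP.
  rewrite -subr_eq0 scalerA -scalerBl scaler_eq0 (negbTE nz) orbF.
  rewrite -mulrBl mulf_eq0 subr_eq0.
  by case/orP => /eqP ->; [right|left].
rewrite /vn_entropy; congr (- _).
have [c0|c0] := eqVneq c 0.
  rewrite c0 /= /xlog2x eqxx big_seq big1 // => z zs.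
  by have [->|->] := ev z zs; rewrite ?c0 /= eqxx.
rewrite (sum_seq2 (g := fun z => xlog2x (complex.Re z)) ev c0); last by rewrite /xlog2x eqxx.
have := eig_sum A; rewrite (sum_seq2 (g := id) ev c0) // -/c => /eqP.
move=> /eqP H.
have k1 : count_mem c (eigenvalues A) = 1%N.
  apply/eqP; rewrite -(@pnatr_eq1 C); apply/eqP; apply: (mulfI c0).
  by rewrite mulr_natr H mulr1.
by rewrite k1.
Qed.


Lemma sum_seq3 (V : zmodType) (s : seq C) (a b : C) (g : C -> V) :
  (forall z, z \in s -> [\/ z = 0, z = a | z = b]) -> a != 0 -> b != 0 -> a != b ->
  g 0 = 0 ->
  \sum_(z <- s) g z = g a *+ count_mem a s + g b *+ count_mem b s
  /\ (count_mem a s + count_mem b s <= size s)%N.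
Proof.
move=> Hs a0 b0 ab g0; elim: s Hs => [|x s IH] Hs; first by rewrite big_nil addr0.
have [IH1 IH2] := IH (fun z zs => Hs z (@mem_behead _ (x :: s) z zs)).
rewrite big_cons IH1 /=.
have [->|->|->] := Hs x (mem_head _ _).
- rewrite g0 add0r !(eq_sym 0) (negbTE a0) (negbTE b0) !add0n; split => //.
  exact: leqW.
- rewrite eqxx (negbTE ab) /= add0n add1n mulrS addrA; split => //.
- rewrite eqxx (eq_sym b a) (negbTE ab) /= add0n add1n mulrS addrCA; split => //.
  by rewrite addnS ltnS.
Qed.

Definition lp : R := (8 + Num.sqrt 37) / 16.
Definition lm : R := (8 - Num.sqrt 37) / 16.
Definition dd : R := 27 / 256.

Lemma sqrt37 : 6 < Num.sqrt (37 : R) < 7.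
Proof.
have h : Num.sqrt (37 : R) ^+ 2 = 37 by rewrite sqr_sqrtr // ler0n.
have h0 : 0 <= Num.sqrt (37 : R) by exact: sqrtr_ge0.
apply/andP; split; nra.
Qed.

Lemma key_count : forall ka kb : nat, (ka + kb <= 4)%N -> lp *+ ka + lm *+ kb = 1 ->
    ka = 1%N /\ kb = 1%N.
Proof.
  have /andP [r6 r7] := sqrt37.
  move=> ka kb; rewrite /lp /lm => Hk H.
  case: ka Hk H => [|[|[|[|[|ka]]]]]; case: kb => [|[|[|[|[|kb]]]]] Hk H.
  all: try by [].
  all: try by split.
  all: try by exfalso; lia.
  all: exfalso; lra.
Qed.

Lemma ent_cubic n (A : 'M[C]_n) : (n <= 4)%N -> \tr A = 1 ->
  A *m (A *m A - A + (dd%:C)%:M) = 0 -> vn_entropy A = lemma3_value R.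
Proof.
move=> n4 trA HA.
have /andP [r6 r7] := sqrt37.
have lp0 : lp != 0 by rewrite /lp; apply/eqP; lra.
have lm0 : lm != 0 by rewrite /lm; apply/eqP; lra.
have lpm : lp != lm by rewrite /lp /lm; apply/eqP; lra.
have ev : forall z, z \in eigenvalues A -> [\/ z = 0, z = lp%:C | z = lm%:C].
  move=> z /eig_vec [v vA nz].
  have := eig_mul (A *m A - A + (dd%:C)%:M) vA.
  rewrite HA mulmx0 !mulmxDr mulmxN mul_mx_scalar (eig_mul A vA) vA.
  rewrite scalerA -scalerBl -scalerDl scalerA => /esym/eqP.
  rewrite scaler_eq0 (negbTE nz) orbF.
  have -> : z * (z * z - z + dd%:C) = z * ((z - lp%:C) * (z - lm%:C)).
    have e1 : lp%:C + lm%:C = 1 :> C.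
      by rewrite -rmorphD /= /lp /lm; congr (_%:C); field.
    have e2 : lp%:C * lm%:C = dd%:C :> C.
      rewrite -rmorphM /= /lp /lm /dd; congr (_%:C).
      have h : Num.sqrt (37 : R) ^+ 2 = 37 by rewrite sqr_sqrtr // ler0n.
      nra.
    have -> : z * z - z = z * z - 1 * z by rewrite mul1r.
    rewrite -e2 -e1; ring.
  rewrite !mulf_eq0 !subr_eq0 => /orP [/eqP ->|/orP [/eqP ->|/eqP ->]].
  - by constructor 1.
  - by constructor 2.
  - by constructor 3.
have lp0' : lp%:C != 0 :> C by rewrite (inj_eq (@complexI R) _ 0).
have lm0' : lm%:C != 0 :> C by rewrite (inj_eq (@complexI R) _ 0).
have lpm' : lp%:C != lm%:C :> C by rewrite (inj_eq (@complexI R)).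
have g0 : xlog2x (complex.Re (0 : C)) = 0 by rewrite /xlog2x eqxx.
have [S1 Kb] := @sum_seq3 _ _ _ _ (fun z => xlog2x (complex.Re z)) ev lp0' lm0' lpm' g0.
have [S2 _] := @sum_seq3 _ _ _ _ id ev lp0' lm0' lpm' erefl.
have := eig_sum A; rewrite S2 trA => H.
have HR : lp *+ count_mem lp%:C (eigenvalues A) + lm *+ count_mem lm%:C (eigenvalues A) = 1.
  by apply: (@complexI R); rewrite rmorphD !rmorphMn.
have Kb' : (count_mem lp%:C (eigenvalues A) + count_mem lm%:C (eigenvalues A) <= 4)%N.
  by apply: (leq_trans Kb); rewrite eig_size.
have [k1 k2] := key_count Kb' HR.
rewrite /vn_entropy S1 k1 k2 /= /xlog2x (negbTE lp0) (negbTE lm0) /lemma3_value /lp /lm.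
rewrite !mulr1n; ring.
Qed.


Lemma sum_idx (V : nmodType) p q (F : 'I_(p * q) -> V) :
  \sum_k F k = \sum_(i < p) \sum_(j < q) F (mxtens_index (i, j)).
Proof.
rewrite pair_big /= (reindex (@mxtens_index p q)) /=; last first.
  by exists (@mxtens_unindex p q) => x _; rewrite ?mxtens_indexK ?mxtens_unindexK.
by apply: eq_bigr => -[i j] _.
Qed.

Lemma tr_ptrace p q (M : 'M[C]_(p * q)) : \tr (ptrace_X M) = \tr M.
Proof.
rewrite /mxtrace (sum_idx (fun k => M k k)) exchange_big /=.
by apply: eq_bigr => j _; rewrite mxE.
Qed.

Lemma ptrace_meas p q (E : 'M[C]_p) (psi : 'cV[C]_(p * q)) j j' :
  ptrace_X (meas_op E (psi *m dagger psi)) j j' =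
  \sum_(i < p) (\sum_(k < p) E i k * psi (mxtens_index (k, j)) 0) *
     Num.conj (psi (mxtens_index (i, j')) 0).
Proof.
rewrite /ptrace_X /meas_op mxE; apply: eq_bigr => i _.
rewrite mulmxA mxE big_ord1 [dagger _ _ _]mxE [(map_mx _ _) _ _]mxE; congr (_ * _).
rewrite mxE sum_idx; apply: eq_bigr => k _.
rewrite (bigD1 j) //= big1 ?addr0; last first.
  by move=> l /negbTE jl; rewrite tensmxE mxE eq_sym jl mulr0n mulr0 mul0r.
by rewrite tensmxE mxE eqxx mulr1.
Qed.


Lemma psd_ptrace_meas p q (E : 'M[C]_p) (psi : 'cV[C]_(p * q)) :
  psd E -> psd (ptrace_X (meas_op E (psi *m dagger psi))).
Proof.
move=> pE v.
pose u : 'cV[C]_p := \col_k \sum_j psi (mxtens_index (k, j)) 0 * Num.conj (v j 0).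
have := pE u; congr (_ <= _).
rewrite !mxE.
under eq_bigr => k _ do rewrite !mxE mulr_suml.
under [RHS]eq_bigr => j' _ do rewrite !mxE mulr_suml.
under eq_bigr => k _ do (under eq_bigr => i _ do
   rewrite !mxE rmorph_sum mulr_suml mulr_suml).
under [RHS]eq_bigr => j' _ do (under eq_bigr => j _ do
   rewrite ptrace_meas !mxE mulr_sumr mulr_suml).
under eq_bigr => k _ do (under eq_bigr => i _ do (under eq_bigr => i0 _ do rewrite mulr_sumr)).
under [RHS]eq_bigr => j' _ do (under eq_bigr => j _ do (under eq_bigr => i _ do
   rewrite !mulr_suml !mulr_sumr !mulr_suml)).
under [RHS]eq_bigr => j' _ do (under eq_bigr => j _ do rewrite exchange_big).
under [RHS]eq_bigr => j' _ do rewrite exchange_big.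
rewrite [RHS]exchange_big.
under [RHS]eq_bigr => k _ do (under eq_bigr => j' _ do rewrite exchange_big).
under [RHS]eq_bigr => k _ do rewrite exchange_big.
apply: eq_bigr => k _; apply: eq_bigr => i _; apply: eq_bigr => j' _; apply: eq_bigr => j _.
rewrite rmorphM /=.
rewrite -[_ * _ * E i k * _]/(Num.conj (psi (mxtens_index (i, j')) 0) *
   Num.conj (Num.conj (v j' 0)) * E i k * (psi (mxtens_index (k, j)) 0 * Num.conj (v j 0))).
rewrite conjCK; ring.
Qed.


Lemma psd_scale n (M : 'M[C]_n) (c : R) : 0 <= c -> psd M -> psd (c%:C *: M).
Proof.
move=> c0 pM v; rewrite -scalemxAr -scalemxAl mxE mulr_ge0 //.
by rewrite -[0 : C]/((0 : R)%:C) (@lecR R).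
Qed.

Lemma tr_psd_ge0 n (M : 'M[C]_n) : psd M -> 0 <= \tr M.
Proof.
move=> pM; rewrite -eig_sum big_seq; apply: sumr_ge0 => z zs.
exact: psd_eig_ge0 pM zs.
Qed.

Lemma avg_ge0 p q k (E : 'I_k -> 'M[C]_p) (psi : 'cV[C]_(p * q)) :
  povm E -> 0 <= avg_cond_entropy E (psi *m dagger psi).
Proof.
move=> [pE _]; rewrite /avg_cond_entropy; apply: sumr_ge0 => a _.
set M := ptrace_X (meas_op (E a) (psi *m dagger psi)).
have pM : psd M := psd_ptrace_meas psi (pE a).
have [trE tr0] := le0c (tr_psd_ge0 pM).
have Hp : meas_prob (E a) (psi *m dagger psi) = complex.Re (\tr M).
  by rewrite /meas_prob /M tr_ptrace.
rewrite Hp; have [->|pn0] := eqVneq (complex.Re (\tr M)) 0; first by rewrite mul0r.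
apply: mulr_ge0 => //; rewrite /post_state Hp -/M.
apply: ent_ge0; first by apply: psd_scale => //; rewrite invr_ge0.
rewrite mxtraceZ {2}trE -rmorphM /= mulVf //.
Qed.


Lemma dagger_mul m n r (A : 'M[C]_(m, n)) (B : 'M[C]_(n, r)) :
  dagger (A *m B) = dagger B *m dagger A.
Proof. by rewrite /dagger map_mxM trmx_mul. Qed.

Lemma psd_rank1 n (w : 'cV[C]_n) : psd (w *m dagger w).
Proof.
move=> v; rewrite mulmxA -mulmxA.
have -> : dagger w *m v = dagger (dagger v *m w) by rewrite dagger_mul daggerK.
by rewrite mxE big_ord1 [dagger _ 0 0]mxE [map_mx _ _ _ _]mxE mul_conjC_ge0.
Qed.

Lemma povm_delta p : povm (fun a : 'I_p => delta_mx a a : 'M[C]_p).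
Proof.
split.
  move=> a; have -> : delta_mx a a = (delta_mx a 0 : 'cV[C]_p) *m dagger (delta_mx a 0).
    have -> : dagger (delta_mx a 0 : 'cV[C]_p) = delta_mx 0 a.
      by apply/matrixP => i j; rewrite !mxE andbC conjC_nat.
    by rewrite mul_delta_mx.
  exact: psd_rank1.
apply/matrixP => i j; rewrite summxE !mxE (bigD1 i) //= big1 ?addr0.
  by rewrite !mxE eqxx /= eq_sym.
by move=> a; rewrite mxE eq_sym => /negbTE ->.
Qed.

Lemma Re_realM (x : R) (z : C) : complex.Re (x%:C * z) = x * complex.Re z.
Proof. by case: z => a b; rewrite /= mul0r subr0. Qed.

Lemma xlog2x0 : xlog2x (0 : R) = 0.
Proof. by rewrite /xlog2x eqxx. Qed.

Lemma xlog2x1 : xlog2x (1 : R) = 0.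
Proof. by rewrite /xlog2x oner_eq0 /log2 ln1 mul0r mulr0. Qed.

Lemma avg_delta p q (psi : 'cV[C]_(p * q)) :
  avg_cond_entropy (fun a : 'I_p => delta_mx a a : 'M[C]_p) (psi *m dagger psi) = 0.
Proof.
rewrite /avg_cond_entropy big1 // => a _.
set M := ptrace_X (meas_op (delta_mx a a) (psi *m dagger psi)).
pose u : 'cV[C]_q := \col_j psi (mxtens_index (a, j)) 0.
have HM : M = u *m dagger u.
  apply/matrixP => j j'; rewrite /M ptrace_meas mxE big_ord1 !mxE.
  rewrite (bigD1 a) //= [X in _ + X]big1 ?addr0; last first.
    move=> i /negbTE ia; rewrite big1 ?mul0r // => k _.
    by rewrite mxE ia mul0r.
  rewrite (bigD1 a) //= big1 ?addr0; last first.
    by move=> k /negbTE ka; rewrite mxE ka andbF mul0r.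
  by rewrite mxE eqxx mul1r.
have Hp : meas_prob (delta_mx a a) (psi *m dagger psi) = complex.Re (\tr M).
  by rewrite /meas_prob /M tr_ptrace.
rewrite /post_state -/M Hp HM scalemxAl ent_rank1 -scalemxAl -HM mxtraceZ Re_realM.
have [->|pn0] := eqVneq (complex.Re (\tr M)) 0; first by rewrite mul0r.
by rewrite mulVf // xlog2x1 oppr0 mulr0.
Qed.

Local Open Scope classical_set_scope.
Lemma inf_pure p q (psi : 'cV[C]_(p * q)) :
  inf [set x : R | exists (k : nat) (E : 'I_k -> 'M[C]_p),
         povm E /\ x = avg_cond_entropy E (psi *m dagger psi)] = 0.
Proof.
set S := [set x : R | _].
have S0 : S 0 by exists p, (fun a : 'I_p => delta_mx a a); split; [exact: povm_delta| rewrite avg_delta].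
have lb : forall y, S y -> 0 <= y by move=> y [k [E [pE ->]]]; exact: avg_ge0.
apply/eqP; rewrite eq_le; apply/andP; split.
  by apply: (ge_inf _ S0); exists 0.
by apply: lb_le_inf; [exists 0 | ].
Qed.

Local Close Scope classical_set_scope.
Lemma discord_pure p q (psi : 'cV[C]_(p * q)) :
  discord (psi *m dagger psi) =
  vn_entropy (ptrace_Y (psi *m dagger psi)) - vn_entropy (psi *m dagger psi).
Proof. by rewrite /discord inf_pure add0r. Qed.

End S.

Section S2.
Variable R : realType.
Local Notation C := R[i].

Definition bb (k : 'I_8) : R := if val k == 7%N then -5 else 1.

Lemma sqrt2_sq : Num.sqrt (2 : R) * Num.sqrt 2 = 2.
Proof. by rewrite -expr2 sqr_sqrtr // ler0n. Qed.

Lemma rho3E k l : rho3 R k l = (bb k * bb l / 32)%:C.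
Proof.
rewrite /rho3 mxE big_ord1 !mxE conj_real -rmorphM; congr (_%:C).
rewrite /bb; set s := Num.sqrt (2 : R).
have s2 : s * s = 2 by exact: sqrt2_sq.
have s0 : s != 0 by apply/eqP => h; move: s2; rewrite h mul0r => /eqP; rewrite eq_sym pnatr_eq0.
have -> : (32 : R) = 16 * (s * s) by rewrite s2; lra.
set x := (if val k == 7%N then _ else _); set y := (if val l == 7%N then _ else _).
by field.
Qed.

Definition rA : 'M[R]_2 := \matrix_(i, i')
  (if (val i == 0%N) && (val i' == 0%N) then 4/32
   else if (val i == 1%N) && (val i' == 1%N) then 28/32 else -2/32).

Lemma rhoA_E : rho_A3 R = map_mx (real_complex R) rA.
Proof.
apply/matrixP => i i'; rewrite /rho_A3 /ptrace_Y !mxE.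
under eq_bigr => j _ do rewrite rho3E.
rewrite -rmorph_sum; congr (_%:C).
rewrite !big_ord_recr big_ord0 /= /bb /=.
case: i => [[|[|i]] Hi]; case: i' => [[|[|i']] Hi'] //=; lra.
Qed.


Lemma rA_cubic : rA *m (rA *m rA - rA + (dd R)%:M) = 0.
Proof.
apply/matrixP => i j; rewrite [RHS]mxE.
do ![rewrite mxE | rewrite big_ord_recr | rewrite big_ord0].
case: i => [[|[|i]] Hi]; case: j => [[|[|j]] Hj] //=; rewrite /dd; lra.
Qed.

Lemma rA_tr : \tr rA = 1.
Proof. rewrite /mxtrace !big_ord_recr big_ord0 !mxE /=; lra. Qed.


Definition rAB : 'M[R]_4 := \matrix_(i, i')
  (if (val i == 3%N) && (val i' == 3%N) then 26/32
   else if (val i == 3%N) || (val i' == 3%N) then -4/32 else 2/32).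

Lemma rhoAB_E : rho_A3B3 R = map_mx (real_complex R) rAB.
Proof.
apply/matrixP => i i'; rewrite /rho_A3B3 /ptrace_Y !mxE.
under eq_bigr => j _ do rewrite rho3E.
rewrite -rmorph_sum; congr (_%:C).
rewrite !big_ord_recr big_ord0 /= /bb /=.
case: i => [[|[|[|[|i]]]] Hi]; case: i' => [[|[|[|[|i']]]] Hi'] //=; lra.
Qed.

Lemma rAB_cubic : rAB *m (rAB *m rAB - rAB + (dd R)%:M) = 0.
Proof.
apply/matrixP => i j; rewrite [RHS]mxE.
do ![rewrite mxE | rewrite big_ord_recr | rewrite big_ord0].
case: i => [[|[|[|[|i]]]] Hi]; case: j => [[|[|[|[|j]]]] Hj] //=; rewrite /dd; lra.
Qed.

Lemma rAB_tr : \tr rAB = 1.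
Proof. rewrite /mxtrace !big_ord_recr big_ord0 !mxE /=; lra. Qed.

End S2.

Definition Pq (o : 'I_3 -> 'I_3) (i k : 'I_8) : bool := [forall t, qbit k (o t) == qbit i t].
Definition t0 : 'I_3 := @Ordinal 3 0 isT.
Definition t1 : 'I_3 := @Ordinal 3 1 isT.
Definition t2 : 'I_3 := @Ordinal 3 2 isT.
Definition Pq' (o : 'I_3 -> 'I_3) (i k : 'I_8) : bool :=
  [&& qbit k (o t0) == qbit i t0, qbit k (o t1) == qbit i t1 & qbit k (o t2) == qbit i t2].

Lemma forall3 (f : 'I_3 -> bool) : [forall t, f t] = [&& f t0, f t1 & f t2].
Proof.
apply/forallP/and3P => [H|[h0 h1 h2] [[|[|[|//]]] Ht]]; first by split; apply: H.
- by have -> : Ordinal Ht = t0 by apply: val_inj.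
- by have -> : Ordinal Ht = t1 by apply: val_inj.
- by have -> : Ordinal Ht = t2 by apply: val_inj.
Qed.

Lemma PqE o i k : Pq o i k = Pq' o i k.
Proof. by rewrite /Pq forall3. Qed.

Definition sfun (l : seq nat) (i : 'I_8) : 'I_8 := inord (nth 0%N l i).

Lemma check_gen o (l : seq nat) :
  (forall i k : 'I_8, Pq' o i k = (val k == nth 0%N l i)) ->
  (forall i : 'I_8, nth 0%N l i < 8)%N ->
  forall i k : 'I_8, Pq o i k = (k == sfun l i).
Proof.
move=> H1 H2 i k; rewrite PqE H1 /sfun -(inj_eq val_inj) /= inordK //.
Qed.

Lemma qA_E : qA = t0. Proof. by apply: val_inj; rewrite /= inordK. Qed.
Lemma qB_E : qB = t1. Proof. by apply: val_inj; rewrite /= inordK. Qed.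
Lemma qC_E : qC = t2. Proof. by apply: val_inj; rewrite /= inordK. Qed.

Lemma check1 : forall i k : 'I_8, Pq (qorder qB qA qC) i k = (k == sfun [:: 0; 1; 4; 5; 2; 3; 6; 7]%N i).
Proof.
apply: check_gen => [i k|i]; rewrite ?qA_E ?qB_E ?qC_E.
  case: i => [[|[|[|[|[|[|[|[|//]]]]]]]] Hi]; case: k => [[|[|[|[|[|[|[|[|//]]]]]]]] Hk];
  vm_compute; reflexivity.
by case: i => [[|[|[|[|[|[|[|[|//]]]]]]]] Hi].
Qed.

Lemma check2 : forall i k : 'I_8, Pq (qorder qC qA qB) i k = (k == sfun [:: 0; 2; 4; 6; 1; 3; 5; 7]%N i).
Proof.
apply: check_gen => [i k|i]; rewrite ?qA_E ?qB_E ?qC_E.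
  case: i => [[|[|[|[|[|[|[|[|//]]]]]]]] Hi]; case: k => [[|[|[|[|[|[|[|[|//]]]]]]]] Hk];
  vm_compute; reflexivity.
by case: i => [[|[|[|[|[|[|[|[|//]]]]]]]] Hi].
Qed.

Lemma check3 : forall i k : 'I_8, Pq (qorder qA qC qB) i k = (k == sfun [:: 0; 2; 1; 3; 4; 6; 5; 7]%N i).
Proof.
apply: check_gen => [i k|i]; rewrite ?qA_E ?qB_E ?qC_E.
  case: i => [[|[|[|[|[|[|[|[|//]]]]]]]] Hi]; case: k => [[|[|[|[|[|[|[|[|//]]]]]]]] Hk];
  vm_compute; reflexivity.
by case: i => [[|[|[|[|[|[|[|[|//]]]]]]]] Hi].
Qed.

Lemma check4 : forall i k : 'I_8, Pq (qorder qB qC qA) i k = (k == sfun [:: 0; 4; 1; 5; 2; 6; 3; 7]%N i).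
Proof.
apply: check_gen => [i k|i]; rewrite ?qA_E ?qB_E ?qC_E.
  case: i => [[|[|[|[|[|[|[|[|//]]]]]]]] Hi]; case: k => [[|[|[|[|[|[|[|[|//]]]]]]]] Hk];
  vm_compute; reflexivity.
by case: i => [[|[|[|[|[|[|[|[|//]]]]]]]] Hi].
Qed.

Lemma bb_sfun (R : realType) (l : seq nat) : 
  (forall i : 'I_8, (nth 0%N l i < 8)%N && ((nth 0%N l i == 7%N) == (val i == 7%N))) ->
  forall i, bb R (sfun l i) = bb R i.
Proof.
move=> H i; have /andP [h1 /eqP h2] := H i.
by rewrite /bb /sfun /= inordK // h2.
Qed.

Lemma reorder_gen (R : realType) o (s : 'I_8 -> 'I_8) :
  (forall i k, Pq o i k = (k == s i)) -> (forall i, bb R (s i) = bb R i) ->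
  reorder o (rho3 R) = rho3 R.
Proof.
move=> HP Hb; apply/matrixP => i j; rewrite mxE.
rewrite (eq_bigr (fun k => if k == s i then rho3 R k (s j) else 0)); last first.
  move=> k _.
  have -> : [forall t, qbit k (o t) == qbit i t] = (k == s i) by exact: HP.
  case: eqP => _; last by rewrite big1.
  rewrite (eq_bigr (fun l => if l == s j then rho3 R k l else 0)); last first.
    move=> l _; have -> : [forall t, qbit l (o t) == qbit j t] = (l == s j) by exact: HP.
    by [].
  by rewrite -big_mkcond big_pred1_eq.
by rewrite -big_mkcond big_pred1_eq !rho3E !Hb.
Qed.


Section Final.
Variable R : realType.
Local Notation C := R[i].

Lemma map_tr n (M : 'M[R]_n) : \tr (map_mx (real_complex R) M) = (\tr M)%:C.
Proof.
rewrite /mxtrace rmorph_sum; apply: eq_bigr => i _; by rewrite mxE.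
Qed.

Lemma map_cubic n (M : 'M[R]_n) : M *m (M *m M - M + (dd R)%:M) = 0 ->
  let A := map_mx (real_complex R) M in A *m (A *m A - A + ((dd R)%:C)%:M) = 0.
Proof.
move=> H /=; rewrite -map_mxM -map_mxB -map_scalar_mx -map_mxD -map_mxM H.
by rewrite map_mx0.
Qed.

Lemma ent_rhoA : vn_entropy (rho_A3 R) = lemma3_value R.
Proof.
rewrite rhoA_E; apply: ent_cubic => //.
  by rewrite map_tr rA_tr.
exact: map_cubic (rA_cubic R).
Qed.

Lemma ent_rhoAB : vn_entropy (rho_A3B3 R) = lemma3_value R.
Proof.
rewrite rhoAB_E; apply: ent_cubic => //.
  by rewrite map_tr rAB_tr.
exact: map_cubic (rAB_cubic R).
Qed.

Lemma ent_rho3 : vn_entropy (rho3 R) = 0.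
Proof.
rewrite /rho3 ent_rank1 -/(rho3 R) /mxtrace.
under eq_bigr => k _ do rewrite rho3E.
rewrite -rmorph_sum /= !big_ord_recr big_ord0 /= /bb /=.
have -> : 0 + 1 * 1 / 32 + 1 * 1 / 32 + 1 * 1 / 32 + 1 * 1 / 32 + 1 * 1 / 32 +
   1 * 1 / 32 + 1 * 1 / 32 + (-5) * (-5) / 32 = (1 : R) by lra.
by rewrite xlog2x1 oppr0.
Qed.

Lemma D24 : @discord R 2 4 (rho3 R) = vn_entropy (rho_A3 R).
Proof. by rewrite /rho3 (discord_pure (p:=2) (q:=4) (psi3 R)) -/(rho3 R) ent_rho3 subr0. Qed.

Lemma D42 : @discord R 4 2 (rho3 R) = vn_entropy (rho_A3B3 R).
Proof. by rewrite /rho3 (discord_pure (p:=4) (q:=2) (psi3 R)) -/(rho3 R) ent_rho3 subr0. Qed.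

Lemma ro1 : reorder (qorder qB qA qC) (rho3 R) = rho3 R.
Proof.
apply: reorder_gen; first exact: check1.
by apply: bb_sfun => -[[|[|[|[|[|[|[|[|//]]]]]]]] Hi].
Qed.
Lemma ro2 : reorder (qorder qC qA qB) (rho3 R) = rho3 R.
Proof.
apply: reorder_gen; first exact: check2.
by apply: bb_sfun => -[[|[|[|[|[|[|[|[|//]]]]]]]] Hi].
Qed.
Lemma ro3 : reorder (qorder qA qC qB) (rho3 R) = rho3 R.
Proof.
apply: reorder_gen; first exact: check3.
by apply: bb_sfun => -[[|[|[|[|[|[|[|[|//]]]]]]]] Hi].
Qed.
Lemma ro4 : reorder (qorder qB qC qA) (rho3 R) = rho3 R.
Proof.
apply: reorder_gen; first exact: check4.
by apply: bb_sfun => -[[|[|[|[|[|[|[|[|//]]]]]]]] Hi].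
Qed.

End Final.

Local Close Scope complex_scope.

Theorem lemma3 (R : realType) :
  D_BC_A R = D_AC_B R /\ D_AC_B R = D_AB_C R /\ D_AB_C R = D_C_AB R /\
  D_C_AB R = D_B_AC R /\ D_B_AC R = D_A_BC R /\ D_A_BC R = lemma3_value R /\
  D_BC_A R = vn_entropy (rho_A3 R) /\ D_C_AB R = vn_entropy (rho_A3B3 R).
Proof.
rewrite /D_BC_A /D_AC_B /D_AB_C /D_C_AB /D_B_AC /D_A_BC.
rewrite ro1 ro2 ro3 ro4 D24 D42 ent_rhoA ent_rhoAB.
by do !split.
Qed.
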